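(* Let $\Gamma$ be a symmetric bimatrix game with strategy set $C_1$ and row-player utility $u_1$, and let $N\ge2$ be finite. Let $\Gamma^{N}$ be the $N$-player game in which every player has strategy set $C_1$ and player $i$ has utility $u_i^{N}(s_1,\dots,s_N)=\sum_{j\neq i}u_1(s_i,s_j)$. Then the symmetric correlated equilibria of $\Gamma^N$ (correlated equilibria of $\Gamma^N$ whose distribution on $C_1^N$ is invariant under all permutations of the players) are exactly the $N$-exchangeable equilibria of $\Gamma$.
   Context: A symmetric bimatrix game: two players with common finite strategy set $C_1$ and utilities with $u_1(s_1,s_2)=u_2(s_2,s_1)$. For a finite game with players $i$, a correlated equilibrium is a distribution $\pi$ on strategy profiles such that for every player $i$ and all $s_i,t_i$, $\sum_{s_{-i}}[u_i(t_i,s_{-i})-u_i(s)]\pi(s)\le0$. A distribution on $C_1^N$ is $N$-exchangeable if it is invariant under all permutations of the $N$ coordinates. An $N$-exchangeable equilibrium of $\Gamma$ is an $N$-exchangeable distribution of random variables $X_1,\dots,X_N$ such that the marginal distribution of $(X_1,X_2)$ is a correlated equilibrium of $\Gamma$. *)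

(* Defs.v *)
From mathcomp Require Import all_boot all_order all_algebra all_fingroup.
Set Implicit Arguments. Unset Strict Implicit. Unset Printing Implicit Defensive.
Import Order.TTheory GRing.Theory Num.Theory.
Local Open Scope ring_scope.

Definition profile (C : finType) (n : nat) := {ffun 'I_n -> C}.

Definition is_distr (R : realFieldType) (T : finType) (pi : T -> R) : Prop :=
  (forall x, 0 <= pi x) /\ \sum_(x : T) pi x = 1.

Definition deviate (C : finType) (n : nat) (s : profile C n) (i : 'I_n) (t : C)
  : profile C n := [ffun k => if k == i then t else s k].

Definition correlated_eq (R : realFieldType) (C : finType) (n : nat)
  (U : 'I_n -> profile C n -> R) (pi : profile C n -> R) : Prop :=
  is_distr pi /\
  forall (i : 'I_n) (si ti : C),
    \sum_(s : profile C n | s i == si) (U i (deviate s i ti) - U i s) * pi s <= 0.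

Definition exchangeable (R : realFieldType) (C : finType) (n : nat)
  (pi : profile C n -> R) : Prop :=
  forall (sigma : {perm 'I_n}) (s : profile C n),
    pi [ffun k => s (sigma k)] = pi s.

(* symmetric bimatrix game Gamma from the row utility u :
   u_1(s1,s2) = u(s1,s2), u_2(s1,s2) = u_1(s2,s1) = u(s2,s1) *)
Definition p1 : 'I_2 := ord0.
Definition p2 : 'I_2 := ord_max.
Definition bimatrix_util (R : realFieldType) (C : finType) (u : C -> C -> R)
  (i : 'I_2) (s : profile C 2) : R :=
  if i == p1 then u (s p1) (s p2) else u (s p2) (s p1).

Definition multi_util (R : realFieldType) (C : finType) (u : C -> C -> R)
  (n : nat) (i : 'I_n) (s : profile C n) : R :=
  \sum_(j : 'I_n | j != i) u (s i) (s j).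

Definition pair_marginal (R : realFieldType) (C : finType) (n : nat)
  (i j : 'I_n) (pi : profile C n -> R) : profile C 2 -> R :=
  fun a => \sum_(s : profile C n | (s i == a p1) && (s j == a p2)) pi s.

Definition exchangeable_eq (R : realFieldType) (C : finType) (u : C -> C -> R)
  (n : nat) (i1 i2 : 'I_n) (pi : profile C n -> R) : Prop :=
  is_distr pi /\ exchangeable pi /\
  correlated_eq (bimatrix_util u) (pair_marginal i1 i2 pi).

(* Main.v *)
Require Import Defs.
From mathcomp Require Import all_boot all_order all_algebra all_fingroup.
Import GRing.Theory Num.Theory.
Local Open Scope ring_scope.
Set Implicit Arguments. Unset Strict Implicit.

Section Aux.
Variables (R : realFieldType) (C : finType) (u : C -> C -> R) (N : nat).
Variable (pi : profile C N -> R).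

Definition key (i j : 'I_N) (s : profile C N) : profile C 2 :=
  [ffun k => s (if k == p1 then i else j)].

Lemma keyE i j s a :
  (key i j s == a) = (s i == a p1) && (s j == a p2).
Proof.
apply/eqP/andP.
  by move<-; rewrite !ffunE /=; split.
move=> [/eqP H1 /eqP H2]; apply/ffunP => k; rewrite ffunE.
case: k => [[|[|m]] Hk] //=.
  by rewrite H1; congr (a _); apply: val_inj.
by rewrite H2; congr (a _); apply: val_inj.
Qed.

Lemma marg_sum i j (P : pred (profile C 2)) (g : profile C 2 -> R) :
  \sum_(a | P a) g a * pair_marginal i j pi a =
  \sum_(s | P (key i j s)) g (key i j s) * pi s.
Proof.
rewrite [RHS](partition_big (key i j) P) //=.
apply: eq_bigr => a Pa.
rewrite /pair_marginal big_distrr /=.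
apply: eq_big => s; first by rewrite -(keyE i j s a); case: eqP => [->|]; rewrite ?Pa ?andbF.
by rewrite -(keyE i j s a) => /eqP ->.
Qed.

Definition T (si ti : C) (i j : 'I_N) :=
  \sum_(s : profile C N | s i == si) (u ti (s j) - u si (s j)) * pi s.

Lemma T_perm si ti (sigma : {perm 'I_N}) i j :
  exchangeable pi -> T si ti i j = T si ti (sigma i) (sigma j).
Proof.
move=> ex; rewrite /T.
rewrite (reindex (fun s : profile C N => [ffun k => s (sigma k)])) /=.
  by apply: eq_big => [s|s _]; rewrite ?ex !ffunE.
apply: onW_bij.
exists (fun s : profile C N => [ffun k => s ((sigma^-1)%g k)]) => s;
  apply/ffunP => k; rewrite !ffunE ?permKV ?permK //.
Qed.

Lemma T_01 si ti (i j : 'I_N) (i0 j0 : 'I_N) :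
  exchangeable pi -> i != j -> i0 != j0 -> T si ti i j = T si ti i0 j0.
Proof.
move=> ex ij ij0.
rewrite (T_perm si ti (tperm i i0)) // tpermL.
set j' := tperm i i0 j.
have hj : j' != i0.
  by rewrite /j' -{2}(tpermL i i0) (inj_eq (@perm_inj _ _)) eq_sym.
rewrite (T_perm si ti (tperm j' j0)) // tpermL.
rewrite tpermD //; first by rewrite eq_sym.
Qed.

Lemma multi_T (i : 'I_N) si ti :
  \sum_(s : profile C N | s i == si)
     (multi_util u i (deviate s i ti) - multi_util u i s) * pi s =
  \sum_(j | j != i) T si ti i j.
Proof.
rewrite /T.
rewrite (eq_bigr (fun s : profile C N => \sum_(j | j != i) (u ti (s j) - u si (s j)) * pi s)).
  by rewrite exchange_big.
move=> s /eqP Hs; rewrite /multi_util -sumrB mulr_suml.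
apply: eq_bigr => j Hj; rewrite !ffunE (negbTE Hj) eqxx Hs //.
Qed.

End Aux.

Theorem proposition4p10 (R : realFieldType) (C : finType) (u : C -> C -> R)
  (N : nat) (hN : (2 <= N)%N) (pi : profile C N -> R) :
  let i1 : 'I_N := Ordinal (ltn_trans (ltnSn 0) hN) in
  let i2 : 'I_N := Ordinal hN in
  (correlated_eq (multi_util u (n:=N)) pi /\ exchangeable pi)
  <-> exchangeable_eq u i1 i2 pi.
Proof.
move=> i1 i2.
have i12 : i1 != i2 by [].
have margD : is_distr pi -> is_distr (pair_marginal i1 i2 pi).
  move=> [H0 H1]; split.
    by move=> a; apply: sumr_ge0 => s _; apply: H0.
  have := marg_sum pi i1 i2 predT (fun _ => 1).
  rewrite /= => E.
  under eq_bigr do rewrite -[pair_marginal _ _ _ _]mul1r.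
  by rewrite E; under eq_bigr do rewrite mul1r.
have pl1 : forall si ti,
  \sum_(a : profile C 2 | a p1 == si)
     (bimatrix_util u p1 (deviate a p1 ti) - bimatrix_util u p1 a)
       * pair_marginal i1 i2 pi a = T u pi si ti i1 i2.
  move=> si ti.
  rewrite marg_sum /T; apply: eq_big => s; first by rewrite /key ffunE.
  rewrite /key /bimatrix_util !ffunE /= => /eqP ->; by [].
have pl2 : forall si ti,
  \sum_(a : profile C 2 | a p2 == si)
     (bimatrix_util u p2 (deviate a p2 ti) - bimatrix_util u p2 a)
       * pair_marginal i1 i2 pi a = T u pi si ti i2 i1.
  move=> si ti.
  rewrite marg_sum /T; apply: eq_big => s; first by rewrite /key ffunE.
  rewrite /key /bimatrix_util !ffunE /= => /eqP ->; by [].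
split.
  move=> [[D CE] ex]; split; first exact: D.
  split; first exact: ex.
  split; first exact: margD.
  have key1 : forall si ti, T u pi si ti i1 i2 <= 0.
    move=> si ti; have := CE i1 si ti; rewrite multi_T.
    rewrite (eq_bigr (fun _ => T u pi si ti i1 i2)); last first.
      by move=> j Hj; apply: T_01 => //; rewrite eq_sym.
    rewrite sumr_const pmulrn_lle0 //.
    by rewrite cardC1 card_ord -subn1 subn_gt0.
  move=> i si ti; case: i => [[|[|m]] Hm] //.
    have -> : Ordinal Hm = p1 by apply: val_inj.
    by rewrite pl1 key1.
  have -> : Ordinal Hm = p2 by apply: val_inj.
  by rewrite pl2 (@T_01 _ _ u N pi _ _ _ _ i1 i2) // ?key1.
move=> [D [ex CE]]; split=> //; split=> // i si ti.
rewrite multi_T; apply: sumr_le0 => j Hj.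
rewrite (@T_01 _ _ u N pi _ _ _ _ i1 i2) //; last by rewrite eq_sym.
by have := CE.2 p1 si ti; rewrite pl1.
Qed.
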